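(* Suppose condition (iv) of the context holds. Set $\theta_*:=d(2\alpha\beta-1)-2\beta$; let $\theta>\min\{\theta_*,s-2\beta\}$ if $\theta_*\ge0$, and $\theta=0$ otherwise. Then there exists $C>0$, independent of $h$, such that \[ \|(L^{-\beta}-L_h^{-\beta}\Pi_h)g\|_H\le C h^{\min\{d(2\alpha\beta-1),s\}}\|g\|_\theta \] for all $g\in\dot H^\theta$ and all sufficiently small $h\in(0,h_0)$.
   Context: $H$ is a separable real Hilbert space; $L\colon\mathscr{D}(L)\subset H\to H$ densely defined, self-adjoint, positive definite with compact inverse, $H$-orthonormal eigenvectors $\{e_j\}$, nondecreasing eigenvalues $\{\lambda_j\}$ with $c_\lambda j^\alpha\le\lambda_j\le C_\lambda j^\alpha$ ($\alpha,c_\lambda,C_\lambda>0$); $(S(t))_{t\ge0}$ the semigroup generated by $-L$. $\beta\in(0,1)$ and $2\alpha\beta>1$; $d\in\mathbb{N}$ is fixed (the exponent with $\dim V_h\propto h^{-d}$). For $\sigma\ge0$, $\dot H^\sigma:=\mathscr{D}(L^{\sigma/2})$ with $\|\psi\|_\sigma^2=\sum_j\lambda_j^\sigma(\psi,e_j)_H^2$. $(V_h)_{h\in(0,1)}$ are finite-dimensional subspaces of $\dot H^1$, $\Pi_h$ the $H$-orthogonal projection onto $V_h$, $L_h\colon V_h\to V_h$ given by $(L_h\psi_h,\phi_h)_H=\langle L\psi_h,\phi_h\rangle$, $(S_h(t))$ the semigroup on $V_h$ generated by $-L_h$. Condition (iv): there are $h_0\in(0,1)$ and $s>2\beta$ such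 that for $0\le\theta\le\sigma\le s$ there is $C_3>0$ with $\|(S(t)-S_h(t)\Pi_h)g\|_H\le C_3h^\sigma t^{(\theta-\sigma)/2}\|g\|_\theta$ for all $t>0$, $g\in\dot H^\theta$, $h\in(0,h_0)$. *)

(* Defs.v *)
From Stdlib Require Import Reals List.
From Coquelicot Require Import Coquelicot.
Open Scope R_scope.

(* The Hilbert space H is modelled, via the (orthonormal, complete) eigenbasis
   {e_j} of L, as l^2(N): an element is its coordinate sequence (psi, e_j)_H.
   Index j : nat (0-based) corresponds to the paper's index j+1. *)
Definition sq := nat -> R.

Definition in_H (x : sq) : Prop := ex_series (fun j => (x j) ^ 2).
Definition ipH (x y : sq) : R := Series (fun j => x j * y j).
Definition normH (x : sq) : R := sqrt (Series (fun j => (x j) ^ 2)).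
Definition sq_sub (x y : sq) : sq := fun j => x j - y j.

Definition in_Hdot (lam : nat -> R) (sigma : R) (x : sq) : Prop :=
  ex_series (fun j => Rpower (lam j) sigma * (x j) ^ 2).
Definition norm_dot (lam : nat -> R) (sigma : R) (x : sq) : R :=
  sqrt (Series (fun j => Rpower (lam j) sigma * (x j) ^ 2)).

Definition formL (lam : nat -> R) (x y : sq) : R :=
  Series (fun j => lam j * x j * y j).

Definition fsum (n : nat) (f : nat -> R) : R :=
  fold_right (fun i acc => f i + acc) 0 (List.seq 0 n).

Definition S_op (lam : nat -> R) (t : R) (g : sq) : sq :=
  fun j => exp (- t * lam j) * g j.
Definition Lpow (lam : nat -> R) (beta : R) (g : sq) : sq :=
  fun j => Rpower (lam j) (- beta) * g j.

(* Discrete spaces: V_h = span{ b h i | i < N h }, where (b h i)_i is an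
   H-orthonormal basis of V_h made of eigenvectors of L_h, with eigenvalues
   mu h i (i.e. <L b_i, b_k> = mu_i delta_ik). *)
Definition is_disc_eigenbasis (lam : nat -> R) (N : R -> nat)
    (b : R -> nat -> sq) (mu : R -> nat -> R) : Prop :=
  forall h, 0 < h < 1 ->
    (forall i, (i < N h)%nat -> in_Hdot lam 1 (b h i)) /\
    (forall i k, (i < N h)%nat -> (k < N h)%nat ->
        ipH (b h i) (b h k) = if Nat.eqb i k then 1 else 0) /\
    (forall i k, (i < N h)%nat -> (k < N h)%nat ->
        formL lam (b h i) (b h k) = if Nat.eqb i k then mu h i else 0).

Definition Pi_h (N : R -> nat) (b : R -> nat -> sq) (h : R) (g : sq) : sq :=
  fun j => fsum (N h) (fun i => ipH g (b h i) * b h i j).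
Definition Sh_Pi (N : R -> nat) (b : R -> nat -> sq) (mu : R -> nat -> R)
    (h t : R) (g : sq) : sq :=
  fun j => fsum (N h) (fun i => exp (- t * mu h i) * ipH g (b h i) * b h i j).
Definition Lhpow_Pi (N : R -> nat) (b : R -> nat -> sq) (mu : R -> nat -> R)
    (beta h : R) (g : sq) : sq :=
  fun j => fsum (N h) (fun i => Rpower (mu h i) (- beta) * ipH g (b h i) * b h i j).

Definition eigen_ok (lam : nat -> R) (alpha c_lam C_lam : R) : Prop :=
  0 < alpha /\ 0 < c_lam /\ 0 < C_lam /\
  (forall j, lam j <= lam (S j)) /\
  (forall j, c_lam * Rpower (INR (S j)) alpha <= lam j /\
             lam j <= C_lam * Rpower (INR (S j)) alpha).

Definition cond_iv (lam : nat -> R) (N : R -> nat) (b : R -> nat -> sq)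
    (mu : R -> nat -> R) (h0 s : R) : Prop :=
  forall theta sigma, 0 <= theta -> theta <= sigma -> sigma <= s ->
    exists C3, 0 < C3 /\
      forall t g h, 0 < t -> in_Hdot lam theta g -> 0 < h < h0 ->
        normH (sq_sub (S_op lam t g) (Sh_Pi N b mu h t g))
          <= C3 * Rpower h sigma * Rpower t ((theta - sigma) / 2)
                * norm_dot lam theta g.

(* Main.v *)
Require Import Defs.
From Stdlib Require Import Reals List Lra Lia.
From Coquelicot Require Import Coquelicot.
Open Scope R_scope.

Lemma fsum_S n f : fsum (S n) f = fsum n f + f n.
Proof.
  unfold fsum. rewrite seq_S, fold_right_app. simpl.
  generalize (f n). induction (List.seq 0 n) as [|a l IH]; intros r; simpl.
  - lra.
  - rewrite IH. lra.
Qed.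

Lemma fsum_0 f : fsum 0 f = 0.
Proof. reflexivity. Qed.

Lemma fsum_ext n f g : (forall i, (i < n)%nat -> f i = g i) -> fsum n f = fsum n g.
Proof.
  induction n; intros H; [reflexivity|].
  rewrite !fsum_S, IHn by (intros; apply H; lia). rewrite H by lia. reflexivity.
Qed.

Lemma fsum_plus n f g : fsum n (fun i => f i + g i) = fsum n f + fsum n g.
Proof. induction n; [rewrite ?fsum_0; lra|]. rewrite !fsum_S, IHn. cbv beta. lra. Qed.

Lemma fsum_scal n k f : fsum n (fun i => k * f i) = k * fsum n f.
Proof. induction n; [rewrite ?fsum_0; lra|]. rewrite !fsum_S, IHn. cbv beta. lra. Qed.

Lemma fsum_minus n f g : fsum n (fun i => f i - g i) = fsum n f - fsum n g.
Proof. induction n; [rewrite ?fsum_0; lra|]. rewrite !fsum_S, IHn. cbv beta. lra. Qed.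

Lemma fsum_nonneg n f : (forall i, 0 <= f i) -> 0 <= fsum n f.
Proof. intros H; induction n; [rewrite ?fsum_0; lra|]. rewrite fsum_S. specialize (H n). lra. Qed.

Lemma fsum_le n f g : (forall i, (i < n)%nat -> f i <= g i) -> fsum n f <= fsum n g.
Proof.
  induction n; intros H; [rewrite ?fsum_0; lra|]. rewrite !fsum_S.
  assert (fsum n f <= fsum n g) by (apply IHn; intros; apply H; lia).
  specialize (H n ltac:(lia)). lra.
Qed.

Lemma sum_n_fsum a n : sum_n a n = fsum (S n) a.
Proof.
  induction n.
  - rewrite sum_O. rewrite fsum_S, fsum_0. lra.
  - rewrite sum_Sn, IHn, (fsum_S (S n)). reflexivity.
Qed.

Lemma fsum_mono n m a : (forall i, 0 <= a i) -> (n <= m)%nat -> fsum n a <= fsum m a.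
Proof.
  intros H Hnm. induction Hnm; [lra|]. rewrite fsum_S. specialize (H m). lra.
Qed.

Lemma fsum_le_Series a n : (forall i, 0 <= a i) -> ex_series a -> fsum n a <= Series a.
Proof.
  intros Ha He.
  destruct n. { rewrite fsum_0. apply Rle_trans with (sum_n a 0).
    rewrite sum_n_fsum. apply fsum_nonneg; auto.
    pose proof (Series_correct a He) as Hs.
    assert (Rbar_le (sum_n a 0) (Series a)).
    { apply is_lim_seq_le_loc with (fun _ => sum_n a 0) (sum_n a).
      exists 0%nat. intros k _. rewrite !sum_n_fsum. apply fsum_mono; auto; lia.
      apply is_lim_seq_const. exact Hs. }
    exact H. }
  rewrite <- sum_n_fsum.
  pose proof (Series_correct a He) as Hs.
  assert (Rbar_le (sum_n a n) (Series a)).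
  { apply is_lim_seq_le_loc with (fun _ => sum_n a n) (sum_n a).
    exists n. intros k Hk. rewrite !sum_n_fsum. apply fsum_mono; auto; lia.
    apply is_lim_seq_const. exact Hs. }
  exact H.
Qed.

Lemma Series_le_bound a M : (forall n, fsum n a <= M) -> Series a <= Rmax M 0.
Proof.
  intros H. unfold Series.
  assert (Rbar_le (Lim_seq (sum_n a)) (Lim_seq (fun _ => M))).
  { apply Lim_seq_le_loc. exists 0%nat. intros n _. rewrite sum_n_fsum. apply H. }
  rewrite Lim_seq_const in H0.
  destruct (Lim_seq (sum_n a)); simpl in *.
  - apply Rle_trans with M; auto. apply Rmax_l.
  - contradiction.
  - apply Rmax_r.
Qed.

Lemma Series_nonneg a : (forall n, 0 <= a n) -> 0 <= Series a.
Proof.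
  intros H. unfold Series.
  assert (Rbar_le (Lim_seq (fun _ => 0)) (Lim_seq (sum_n a))).
  { apply Lim_seq_le_loc. exists 0%nat. intros n _. rewrite sum_n_fsum. apply fsum_nonneg; auto. }
  rewrite Lim_seq_const in H0.
  destruct (Lim_seq (sum_n a)); simpl in *; lra.
Qed.

Lemma exp_le' x y : x <= y -> exp x <= exp y.
Proof. intros [H|H]. left; apply exp_increasing; auto. subst; lra. Qed.

Lemma ex_series_le_R (a b : nat -> R) : (forall n, Rabs (a n) <= b n) -> ex_series b -> ex_series a.
Proof. intros H Hb. apply (ex_series_le a b); auto. Qed.

Lemma ex_series_scal_R c a : ex_series a -> ex_series (fun n => c * a n).
Proof. intros H. apply (ex_series_scal_l c a H). Qed.

Lemma ex_series_plus_R a b : ex_series a -> ex_series b -> ex_series (fun n => a n + b n).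
Proof. intros H1 H2. apply (ex_series_plus a b H1 H2). Qed.

Definition inH2 (x : sq) := ex_series (fun j => x j ^ 2).

Lemma inH2_comb (x y : sq) k l : inH2 x -> inH2 y -> inH2 (fun j => k * x j + l * y j).
Proof.
  intros Hx Hy. unfold inH2.
  apply ex_series_le_R with (fun j => 2 * k^2 * x j ^2 + 2 * l^2 * y j ^ 2).
  - intros n. rewrite Rabs_pos_eq by apply pow2_ge_0. pose proof (pow2_ge_0 (k * x n - l * y n)). nra.
  - apply ex_series_plus_R; apply ex_series_scal_R; auto.
Qed.

Lemma inH2_0 : inH2 (fun _ => 0).
Proof.
  unfold inH2. exists 0. unfold is_series.
  change (is_lim_seq (sum_n (fun _ : nat => 0 ^ 2)) 0).
  apply is_lim_seq_ext with (fun _ => 0). 2: apply is_lim_seq_const.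
  intros n. rewrite sum_n_fsum. symmetry. transitivity (fsum (S n) (fun i => 0 * 0)).
  apply fsum_ext. intros; simpl; ring. rewrite fsum_scal. ring.
Qed.

Definition psi (beta v : R) := exp (beta * v - exp v).
Definition Kern (beta : R) (f : R -> R) (w : R) := exp (beta * w) * f (exp w).

Lemma ex_RInt_psi beta a b : ex_RInt (psi beta) a b.
Proof.
  apply (ex_RInt_continuous (V:=R_CompleteNormedModule)). intros z _. apply (ex_derive_continuous (K:=R_AbsRing) (V:=R_NormedModule)).
  unfold psi. auto_derive. auto.
Qed.

Lemma psi_pos beta v : 0 < psi beta v.
Proof. apply exp_pos. Qed.

Lemma psi_le1 beta v : psi beta v <= exp (- (1 - beta) * v).
Proof. unfold psi. apply exp_le'. pose proof (exp_ineq1_le v). lra. Qed.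

Lemma psi_le2 beta v : psi beta v <= exp (beta * v).
Proof. unfold psi. apply exp_le'. pose proof (exp_pos v). lra. Qed.

Lemma RInt_psi_bound beta a l M :
  (forall t, a - Rabs l <= t <= a + Rabs l -> psi beta t <= M) ->
  Rabs (RInt (psi beta) a (a + l)) <= Rabs l * M.
Proof.
  intros H. destruct (Rle_or_lt 0 l) as [Hl|Hl].
  - rewrite (Rabs_pos_eq l Hl) in *.
    replace (l * M) with ((a + l - a) * M) by ring.
    apply abs_RInt_le_const. lra. apply ex_RInt_psi.
    intros t Ht. rewrite Rabs_pos_eq by (left; apply psi_pos). apply H; lra.
  - rewrite (Rabs_left l Hl) in *.
    rewrite <- opp_RInt_swap by apply ex_RInt_psi.
    change (Rabs (- RInt (psi beta) (a + l) a) <= - l * M).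
    rewrite Rabs_Ropp.
    replace (- l * M) with ((a - (a + l)) * M) by ring.
    apply abs_RInt_le_const. lra. apply ex_RInt_psi.
    intros t Ht. rewrite Rabs_pos_eq by (left; apply psi_pos). apply H; lra.
Qed.

Lemma exp_INR_pow k n : exp (k * INR n) = exp k ^ n.
Proof.
  induction n. simpl. rewrite Rmult_0_r, exp_0. reflexivity.
  rewrite S_INR, Rmult_plus_distr_l, Rmult_1_r, exp_plus, IHn. simpl. ring.
Qed.

Lemma lim_exp_lin k c : 0 < k -> is_lim_seq (fun n => exp (- k * INR n + c)) 0.
Proof.
  intros Hk.
  apply is_lim_seq_ext with (fun n => exp c * (exp (- k)) ^ n).
  { intros n. rewrite exp_plus, exp_INR_pow. ring. }
  replace (Finite 0) with (Rbar_mult (exp c) 0) by (simpl; rewrite Rmult_0_r; reflexivity).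
  apply is_lim_seq_scal_l. apply is_lim_seq_geom.
  rewrite Rabs_pos_eq by (left; apply exp_pos).
  rewrite <- exp_0. apply exp_increasing. lra.
Qed.

Lemma delta_lim beta l : 0 < beta < 1 ->
  is_lim_seq (fun n : nat => RInt (psi beta) (- INR n + l) (INR n + l)
                             - RInt (psi beta) (- INR n) (INR n)) 0.
Proof.
  intros Hb.
  apply is_lim_seq_abs_0.
  apply is_lim_seq_le_le with (fun _ => 0)
    (fun n => Rabs l * exp (- (1 - beta) * INR n + (1 - beta) * Rabs l)
            + Rabs l * exp (- beta * INR n + beta * Rabs l)).
  2: apply is_lim_seq_const.
  2: { replace (Finite 0) with (Finite (Rabs l * 0 + Rabs l * 0)) by (f_equal; ring).
       apply is_lim_seq_plus'; apply (is_lim_seq_scal_l _ (Rabs l) 0);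
       apply lim_exp_lin; lra. }
  intros n. split. apply Rabs_pos.
  set (x := INR n).
  assert (E : RInt (psi beta) (- x + l) (x + l) - RInt (psi beta) (- x) x
            = RInt (psi beta) x (x + l) - RInt (psi beta) (- x) (- x + l)).
  { rewrite <- (RInt_Chasles (psi beta) (- x + l) x (x + l)) by apply ex_RInt_psi.
    rewrite <- (RInt_Chasles (psi beta) (- x + l) (- x) x) by apply ex_RInt_psi.
    rewrite <- (opp_RInt_swap (psi beta) (- x) (- x + l)) by apply ex_RInt_psi.
    change (RInt (psi beta) (- x) (- x + l)) with (RInt (psi beta) (- x) (- x + l)).
    unfold plus, opp; simpl. ring. }
  rewrite E. eapply Rle_trans. apply Rabs_triang. rewrite Rabs_Ropp.
  apply Rplus_le_compat.
  - apply RInt_psi_bound. intros t Ht. eapply Rle_trans. apply psi_le1.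
    apply exp_le'. nra.
  - apply RInt_psi_bound. intros t Ht. eapply Rle_trans. apply psi_le2.
    apply exp_le'. nra.
Qed.

Definition Good (beta : R) (f : R -> R) (X : R) : Prop :=
  (forall a b, ex_RInt (Kern beta f) a b) /\
  is_lim_seq (fun n : nat => RInt (Kern beta f) (- INR n) (INR n)
                             - RInt (psi beta) (- INR n) (INR n) * X) 0.

Lemma Good_ext beta f g X Y : (forall t, 0 < t -> f t = g t) -> X = Y ->
  Good beta f X -> Good beta g Y.
Proof.
  intros Hfg HXY [H1 H2]. subst Y.
  assert (HK : forall w, Kern beta f w = Kern beta g w).
  { intros w. unfold Kern. rewrite Hfg by apply exp_pos. reflexivity. }
  split.
  - intros a b. apply (ex_RInt_ext (V:=R_NormedModule) (Kern beta f)); auto.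
  - apply is_lim_seq_ext with (2 := H2). intros n.
    rewrite (RInt_ext (V:=R_CompleteNormedModule) (Kern beta f) (Kern beta g)); auto.
Qed.

Lemma Good_comb beta f g X Y k l : Good beta f X -> Good beta g Y ->
  Good beta (fun t => k * f t + l * g t) (k * X + l * Y).
Proof.
  intros [F1 F2] [G1 G2].
  assert (HK : forall w, Kern beta (fun t => k * f t + l * g t) w
                  = plus (scal k (Kern beta f w)) (scal l (Kern beta g w))).
  { intros w. unfold Kern, plus, scal; simpl. unfold mult; simpl. ring. }
  assert (HE : forall a b, ex_RInt (fun w => plus (scal k (Kern beta f w)) (scal l (Kern beta g w))) a b).
  { intros a b. apply (ex_RInt_plus (V:=R_NormedModule)); apply (ex_RInt_scal (V:=R_NormedModule)); auto. }
  split.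
  - intros a b. apply (ex_RInt_ext (V:=R_NormedModule)) with (2 := HE a b). intros; auto.
  - apply is_lim_seq_ext with (fun n => k * (RInt (Kern beta f) (- INR n) (INR n)
                             - RInt (psi beta) (- INR n) (INR n) * X) +
                             l * (RInt (Kern beta g) (- INR n) (INR n)
                             - RInt (psi beta) (- INR n) (INR n) * Y)).
    + intros n.
      rewrite (RInt_ext (V:=R_CompleteNormedModule) (Kern beta (fun t => k * f t + l * g t))
         (fun w => plus (scal k (Kern beta f w)) (scal l (Kern beta g w)))) by auto.
      rewrite (RInt_plus (V:=R_CompleteNormedModule)) by (apply (ex_RInt_scal (V:=R_NormedModule)); auto).
      rewrite !(RInt_scal (V:=R_CompleteNormedModule)) by auto.
      unfold plus, scal; simpl; unfold mult; simpl. ring.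
    + replace (Finite 0) with (Finite (k * 0 + l * 0)) by (f_equal; ring).
      apply is_lim_seq_plus'; apply (is_lim_seq_scal_l _ _ 0); auto.
Qed.

Lemma Good_zero beta : Good beta (fun _ => 0) 0.
Proof.
  split.
  - intros a b. apply (ex_RInt_ext (V:=R_NormedModule) (fun _ => 0)).
    + intros; unfold Kern; simpl; ring.
    + apply (ex_RInt_const (V:=R_NormedModule)).
  - apply is_lim_seq_ext with (fun _ => 0). 2: apply is_lim_seq_const.
    intros n. rewrite (RInt_ext (V:=R_CompleteNormedModule) (Kern beta (fun _ => 0)) (fun _ => 0))
      by (intros; unfold Kern; simpl; ring).
    rewrite RInt_const. unfold scal; simpl; unfold mult; simpl. ring.
Qed.

Lemma Good_exp beta lam : 0 < beta < 1 -> 0 < lam ->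
  Good beta (fun t => exp (- t * lam)) (Rpower lam (- beta)).
Proof.
  intros Hb Hl.
  set (l := ln lam).
  assert (HK : forall w, Kern beta (fun t => exp (- t * lam)) w
                = scal (Rpower lam (- beta)) (scal 1 (psi beta (1 * w + l)))).
  { intros w. unfold Kern, psi, scal, Rpower; simpl; unfold mult; simpl.
    rewrite Rmult_1_l, Rmult_1_l, exp_plus. unfold l. rewrite (exp_ln lam Hl).
    rewrite <- !exp_plus. f_equal. ring. }
  assert (HI : forall a b, RInt (Kern beta (fun t => exp (- t * lam))) a b
            = Rpower lam (- beta) * RInt (psi beta) (a + l) (b + l)).
  { intros a b.
    rewrite (RInt_ext (V:=R_CompleteNormedModule) _ _ a b (fun w _ => HK w)).
    rewrite (RInt_scal (V:=R_CompleteNormedModule)).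
    rewrite (RInt_comp_lin (V:=R_CompleteNormedModule)).
    rewrite !Rmult_1_l. reflexivity.
    apply ex_RInt_psi.
    apply (ex_RInt_comp_lin (V:=R_NormedModule)). apply ex_RInt_psi. }
  split.
  - intros a b. apply (ex_RInt_ext (V:=R_NormedModule)) with (fun w => scal (Rpower lam (- beta)) (scal 1 (psi beta (1 * w + l)))).
    intros; auto.
    apply (ex_RInt_scal (V:=R_NormedModule)). apply (ex_RInt_comp_lin (V:=R_NormedModule)). apply ex_RInt_psi.
  - apply is_lim_seq_ext with (fun n => Rpower lam (- beta) * (RInt (psi beta) (- INR n + l) (INR n + l)
                             - RInt (psi beta) (- INR n) (INR n))).
    + intros n. rewrite HI. ring.
    + replace (Finite 0) with (Rbar_mult (Rpower lam (- beta)) 0) by (simpl; rewrite Rmult_0_r; reflexivity).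
      apply is_lim_seq_scal_l. apply delta_lim; auto.
Qed.

Lemma Good_fsum beta n (f : nat -> R -> R) (X : nat -> R) :
  (forall i, (i < n)%nat -> Good beta (f i) (X i)) ->
  Good beta (fun t => fsum n (fun i => f i t)) (fsum n X).
Proof.
  induction n; intros H.
  - apply Good_ext with (fun _ => 0) 0. intros; rewrite fsum_0; auto. rewrite fsum_0; auto.
    apply Good_zero.
  - apply Good_ext with (fun t => 1 * fsum n (fun i => f i t) + 1 * f n t) (1 * fsum n X + 1 * X n).
    intros; rewrite fsum_S; ring. rewrite fsum_S; ring.
    apply Good_comb. apply IHn; intros; apply H; lia. apply H; lia.
Qed.

Definition K0 beta := RInt (psi beta) (-1) 1.

Lemma K0_pos beta : 0 < beta < 1 -> 0 < K0 beta.
Proof.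
  intros Hb. unfold K0.
  apply Rlt_le_trans with (RInt (fun _ => exp (-1 - exp 1)) (-1) 1).
  - rewrite RInt_const. unfold scal; simpl; unfold mult; simpl.
    pose proof (exp_pos (-1 - exp 1)). lra.
  - apply RInt_le. lra. apply (ex_RInt_const (V:=R_NormedModule)). apply ex_RInt_psi.
    intros x Hx. unfold psi. apply exp_le'.
    assert (exp x <= exp 1) by (apply exp_le'; lra). nra.
Qed.

Lemma Psi_ge_K0 beta n : 0 < beta < 1 -> (1 <= n)%nat ->
  K0 beta <= RInt (psi beta) (- INR n) (INR n).
Proof.
  intros Hb Hn. unfold K0.
  assert (H1 : 1 <= INR n) by (apply (le_INR 1); lia).
  rewrite <- (RInt_Chasles (V:=R_CompleteNormedModule) (psi beta) (- INR n) 1 (INR n)) by apply ex_RInt_psi.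
  rewrite <- (RInt_Chasles (V:=R_CompleteNormedModule) (psi beta) (- INR n) (-1) 1) by apply ex_RInt_psi.
  unfold plus; simpl.
  assert (0 <= RInt (psi beta) (- INR n) (-1)).
  { apply RInt_ge_0. lra. apply ex_RInt_psi. intros; left; apply psi_pos. }
  assert (0 <= RInt (psi beta) 1 (INR n)).
  { apply RInt_ge_0. lra. apply ex_RInt_psi. intros; left; apply psi_pos. }
  lra.
Qed.

Lemma Good_conclude beta f X B : 0 < beta < 1 -> Good beta f X -> 0 <= B ->
  (forall n : nat, RInt (Kern beta f) (- INR n) (INR n) <= B) -> X * K0 beta <= B.
Proof.
  intros Hb [HG1 HG2] HB Hn.
  destruct (Rle_or_lt X 0) as [HX|HX].
  { pose proof (K0_pos beta Hb). nra. }
  set (d := fun n : nat => RInt (Kern beta f) (- INR n) (INR n) - RInt (psi beta) (- INR n) (INR n) * X).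
  assert (Rbar_le (X * K0 beta) (B - 0)).
  { apply is_lim_seq_le_loc with (fun _ => X * K0 beta) (fun n => B - d n).
    - exists 1%nat. intros n Hn1. pose proof (Psi_ge_K0 beta n Hb Hn1). specialize (Hn n).
      unfold d. nra.
    - apply is_lim_seq_const.
    - apply is_lim_seq_minus'. apply is_lim_seq_const. exact HG2. }
  simpl in H. lra.
Qed.

Lemma RInt_exp_bound A k a b : k <> 0 ->
  is_RInt (fun w => A * exp (k * w)) a b (A * exp (k * b) / k - A * exp (k * a) / k).
Proof.
  intros Hk.
  apply (is_RInt_derive (V:=R_CompleteNormedModule) (fun w => A * exp (k * w) / k)).
  - intros x _. auto_derive. auto. field. auto.
  - intros x _. apply (ex_derive_continuous (K:=R_AbsRing) (V:=R_NormedModule)). auto_derive. auto.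
Qed.

Lemma Kern_int_bound beta f X A1 k1 A2 k2 :
  Good beta f X -> 0 <= A1 -> 0 < k1 -> 0 <= A2 -> 0 < k2 ->
  (forall w, Kern beta f w <= A1 * exp (k1 * w)) ->
  (forall w, Kern beta f w <= A2 * exp (- k2 * w)) ->
  forall n : nat, RInt (Kern beta f) (- INR n) (INR n) <= A1 / k1 + A2 / k2.
Proof.
  intros [HG _] HA1 Hk1 HA2 Hk2 H1 H2 n.
  pose proof (pos_INR n) as Hn.
  rewrite <- (RInt_Chasles (V:=R_CompleteNormedModule) (Kern beta f) (- INR n) 0 (INR n)) by auto.
  unfold plus; simpl.
  apply Rplus_le_compat.
  - pose proof (RInt_exp_bound A1 k1 (- INR n) 0 ltac:(lra)) as HI.
    apply Rle_trans with (A1 * exp (k1 * 0) / k1 - A1 * exp (k1 * - INR n) / k1).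
    + rewrite <- (is_RInt_unique _ _ _ _ HI). apply RInt_le. lra. auto. eexists; eauto.
      intros; auto.
    + rewrite Rmult_0_r, exp_0. pose proof (exp_pos (k1 * - INR n)).
      assert (0 <= A1 * exp (k1 * - INR n) / k1). { apply Rmult_le_pos. nra. left; apply Rinv_0_lt_compat; auto. }
      unfold Rdiv in *. lra.
  - pose proof (RInt_exp_bound A2 (- k2) 0 (INR n) ltac:(lra)) as HI.
    apply Rle_trans with (A2 * exp (- k2 * INR n) / (- k2) - A2 * exp (- k2 * 0) / (- k2)).
    + rewrite <- (is_RInt_unique _ _ _ _ HI). apply RInt_le. lra. auto. eexists; eauto.
      intros; auto.
    + replace (- k2 * 0) with 0 by ring. rewrite exp_0. pose proof (exp_pos (- k2 * INR n)).
      assert (0 <= A2 * exp (- k2 * INR n) / k2). { apply Rmult_le_pos. nra. left; apply Rinv_0_lt_compat; auto. }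
      replace (A2 * exp (- k2 * INR n) / - k2 - A2 * 1 / - k2) with (A2 / k2 - A2 * exp (- k2 * INR n) / k2) by (field; lra).
      lra.
Qed.

Lemma CS_fsum J (y z : nat -> R) :
  fsum J (fun j => y j ^ 2) <= 1 -> ex_series (fun j => z j ^ 2) ->
  fsum J (fun j => y j * z j) <= sqrt (Series (fun j => z j ^ 2)).
Proof.
  intros Hy Hz.
  set (A := fsum J (fun j => y j ^ 2)).
  set (B := fsum J (fun j => y j * z j)).
  set (C := fsum J (fun j => z j ^ 2)).
  set (S := Series (fun j => z j ^ 2)).
  assert (HC : C <= S) by (apply fsum_le_Series; auto; intros; apply pow2_ge_0).
  assert (HC0 : 0 <= C) by (apply fsum_nonneg; intros; apply pow2_ge_0).
  assert (Hq : forall t, 0 <= t * t * A - 2 * t * B + C).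
  { intros t. replace (t * t * A - 2 * t * B + C) with (fsum J (fun j => (t * y j - z j) ^ 2)).
    apply fsum_nonneg; intros; apply pow2_ge_0.
    unfold A, B, C. rewrite <- !fsum_scal, <- fsum_minus, <- fsum_plus.
    apply fsum_ext. intros. ring. }
  assert (HS0 : 0 <= S) by lra.
  pose proof (sqrt_pos S) as Hsq. pose proof (sqrt_sqrt S HS0) as Hss.
  destruct (Rle_lt_or_eq_dec 0 (sqrt S) Hsq) as [Hp|He].
  - specialize (Hq (sqrt S)). rewrite Hss in Hq. assert (A * S <= 1 * S).
    { apply Rmult_le_compat_r. nra. exact Hy. }
    assert (2 * sqrt S * B <= 2 * (sqrt S * sqrt S)) by (rewrite Hss; lra).
    nra.
  - rewrite <- He in *. assert (C = 0) by nra. destruct (Rle_or_lt B 0) as [HB|HB]; auto.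
    exfalso. assert (HA0 : 0 <= A) by (apply fsum_nonneg; intros; apply pow2_ge_0).
    specialize (Hq (B / (A + 1))). rewrite H in Hq.
    assert (0 < A + 1) by lra.
    assert (Ht : B / (A + 1) * (B / (A + 1)) * A - 2 * (B / (A + 1)) * B + 0
             = B * B * (A - 2 * (A + 1)) / ((A + 1) * (A + 1))) by (field; lra).
    rewrite Ht in Hq. 
    assert (B * B * (A - 2 * (A + 1)) < 0) by nra.
    assert (0 < (A + 1) * (A + 1)) by nra.
    assert (B * B * (A - 2 * (A + 1)) / ((A + 1) * (A + 1)) < 0).
    { unfold Rdiv. rewrite <- (Rmult_0_l (/ ((A + 1) * (A + 1)))). apply Rmult_lt_compat_r. apply Rinv_0_lt_compat; auto. auto. }
    lra.
Qed.

Lemma stepA (x : sq) M : 0 <= M ->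
  (forall J (y : nat -> R), fsum J (fun j => y j ^ 2) <= 1 -> fsum J (fun j => y j * x j) <= M) ->
  normH x <= M.
Proof.
  intros HM H. unfold normH.
  assert (HQ : forall J, fsum J (fun j => x j ^ 2) <= M * M).
  { intros J. set (Q := fsum J (fun j => x j ^ 2)).
    assert (HQ0 : 0 <= Q) by (apply fsum_nonneg; intros; apply pow2_ge_0).
    destruct (Rle_lt_or_eq_dec 0 Q HQ0) as [Hp|He]; [|rewrite <- He; nra].
    pose proof (sqrt_lt_R0 Q Hp) as Hs. pose proof (sqrt_sqrt Q HQ0) as Hss.
    specialize (H J (fun j => x j / sqrt Q)).
    assert (E1 : fsum J (fun j => (x j / sqrt Q) ^ 2) = 1).
    { transitivity (fsum J (fun j => / Q * x j ^ 2)).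
      apply fsum_ext; intros. replace (/ Q) with (/ (sqrt Q * sqrt Q)) by (rewrite Hss; reflexivity). field. lra.
      rewrite fsum_scal. fold Q. field. lra. }
    assert (E2 : fsum J (fun j => x j / sqrt Q * x j) = sqrt Q).
    { transitivity (fsum J (fun j => / sqrt Q * x j ^ 2)).
      apply fsum_ext; intros. field. lra.
      rewrite fsum_scal. fold Q. pattern Q at 2. rewrite <- Hss. field. lra. }
    cbv beta in H. rewrite E1, E2 in H. specialize (H (Rle_refl _)).
    rewrite <- Hss. apply Rmult_le_compat; lra. }
  pose proof (Series_le_bound _ _ HQ) as HS.
  rewrite Rmax_left in HS by nra.
  apply Rle_trans with (sqrt (M * M)). apply sqrt_le_1_alt; auto.
  rewrite sqrt_square; lra.
Qed.

Lemma Rpower_le_base_neg a c y : 0 < c -> c <= a -> y <= 0 -> Rpower a y <= Rpower c y.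
Proof.
  intros Hc Hca Hy. unfold Rpower. apply exp_le'.
  pose proof (ln_le c a Hc Hca). nra.
Qed.

Lemma Hdot_mono (lam : nat -> R) c th1 th (x : sq) :
  0 < c -> (forall j, c <= lam j) -> th1 <= th -> in_Hdot lam th x ->
  in_Hdot lam th1 x /\
  Series (fun j => Rpower (lam j) th1 * x j ^ 2) <= Rpower c (th1 - th) * Series (fun j => Rpower (lam j) th * x j ^ 2).
Proof.
  intros Hc Hl Ht Hx.
  assert (Hp : forall j, 0 <= Rpower (lam j) th1 * x j ^ 2 <= Rpower c (th1 - th) * (Rpower (lam j) th * x j ^ 2)).
  { intros j. split. apply Rmult_le_pos. left; apply exp_pos. apply pow2_ge_0.
    replace (Rpower (lam j) th1) with (Rpower (lam j) th * Rpower (lam j) (th1 - th)).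
    2: { rewrite <- Rpower_plus. f_equal. ring. }
    pose proof (Rpower_le_base_neg (lam j) c (th1 - th) Hc (Hl j) ltac:(lra)).
    pose proof (exp_pos (th * ln (lam j))). fold (Rpower (lam j) th) in H0.
    pose proof (pow2_ge_0 (x j)). 
    replace (Rpower c (th1 - th) * (Rpower (lam j) th * x j ^ 2)) with
      (Rpower (lam j) th * Rpower c (th1 - th) * x j ^ 2) by ring.
    apply Rmult_le_compat_r. auto. apply Rmult_le_compat_l. lra. auto. }
  assert (He : in_Hdot lam th1 x).
  { unfold in_Hdot. apply ex_series_le_R with (fun j => Rpower c (th1 - th) * (Rpower (lam j) th * x j ^ 2)).
    intros n. rewrite Rabs_pos_eq; apply Hp. apply ex_series_scal_R. exact Hx. }
  split; auto.
  rewrite <- Series_scal_l. apply Series_le. exact Hp. apply ex_series_scal_R. exact Hx.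
Qed.

Lemma Hdot0_inH2 lam (x : sq) : (forall j, 0 < lam j) -> in_Hdot lam 0 x -> inH2 x /\
  Series (fun j => Rpower (lam j) 0 * x j ^ 2) = Series (fun j => x j ^ 2).
Proof.
  intros Hl Hx.
  assert (E : forall j, Rpower (lam j) 0 * x j ^ 2 = x j ^ 2).
  { intros j. rewrite Rpower_O by auto. ring. }
  split.
  - unfold inH2. apply ex_series_le_R with (fun j => Rpower (lam j) 0 * x j ^ 2).
    intros n. rewrite E, Rabs_pos_eq by apply pow2_ge_0. lra. exact Hx.
  - apply Series_ext. exact E.
Qed.

Lemma inH2_ext (x y : sq) : (forall j, x j = y j) -> inH2 x -> inH2 y.
Proof.
  intros E H. unfold inH2. apply ex_series_le_R with (fun j => x j ^ 2).
  intros n. rewrite E, Rabs_pos_eq by apply pow2_ge_0. lra. exact H.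
Qed.

Lemma inH2_fsum n (k : nat -> R) (v : nat -> sq) : (forall i, (i < n)%nat -> inH2 (v i)) ->
  inH2 (fun j => fsum n (fun i => k i * v i j)).
Proof.
  induction n; intros H.
  - apply inH2_ext with (fun _ => 0). intros; rewrite fsum_0; auto. apply inH2_0.
  - apply inH2_ext with (fun j => 1 * fsum n (fun i => k i * v i j) + k n * v n j).
    intros; rewrite fsum_S; ring.
    apply inH2_comb. apply IHn; intros; apply H; lia. apply H; lia.
Qed.

Lemma lam_lb lam alpha c C : eigen_ok lam alpha c C -> forall j, c <= lam j.
Proof.
  intros (Ha & Hc & HC & Hm & Hb) j. destruct (Hb j) as [H1 _].
  assert (HS : 1 <= INR (S j)) by (rewrite S_INR; pose proof (pos_INR j); lra).
  assert (1 <= Rpower (INR (S j)) alpha).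
  { rewrite <- (Rpower_O (INR (S j))) by lra. apply Rle_Rpower; lra. }
  nra.
Qed.

Lemma mu_pos lam alpha c C N b mu h i : eigen_ok lam alpha c C -> is_disc_eigenbasis lam N b mu ->
  0 < h < 1 -> (i < N h)%nat -> 0 < mu h i.
Proof.
  intros He HV Hh Hi.
  destruct (HV h Hh) as (H1 & H2 & H3).
  specialize (H2 i i Hi Hi). specialize (H3 i i Hi Hi). rewrite Nat.eqb_refl in H2, H3.
  rewrite <- H3. unfold formL. unfold ipH in H2.
  pose proof (lam_lb _ _ _ _ He) as Hl. destruct He as (_ & Hc & _).
  specialize (H1 i Hi). unfold in_Hdot in H1.
  assert (E : forall j, Rpower (lam j) 1 * b h i j ^ 2 = lam j * b h i j * b h i j).
  { intros j. rewrite Rpower_1 by (specialize (Hl j); lra). ring. }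
  apply Rlt_le_trans with (Series (fun j => c * (b h i j * b h i j))).
  - rewrite Series_scal_l, H2. lra.
  - apply Series_le. intros j. specialize (Hl j). pose proof (pow2_ge_0 (b h i j)). split.
    simpl in H. nra. simpl in H. nra.
    apply ex_series_le_R with (fun j => Rpower (lam j) 1 * b h i j ^ 2).
    intros n. rewrite E. rewrite Rabs_pos_eq. lra. specialize (Hl n). pose proof (pow2_ge_0 (b h i n)). simpl in H. nra.
    exact H1.
Qed.

Lemma Rpower_exp a w : Rpower (exp w) a = exp (a * w).
Proof. unfold Rpower. rewrite ln_exp. reflexivity. Qed.

Lemma Rpower_h_le h a b : 0 < h < 1 -> a <= b -> Rpower h b <= Rpower h a.
Proof.
  intros Hh Hab. unfold Rpower. apply exp_le'.
  assert (ln h < 0). { rewrite <- ln_1. apply ln_increasing; lra. }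
  nra.
Qed.

Theorem lemma3p3
  (lam : nat -> R) (alpha c_lam C_lam beta : R) (d : nat)
  (N : R -> nat) (b : R -> nat -> sq) (mu : R -> nat -> R)
  (h0 s : R)
  (Heig : eigen_ok lam alpha c_lam C_lam)
  (Hbeta : 0 < beta < 1) (Hab : 2 * alpha * beta > 1)
  (HV : is_disc_eigenbasis lam N b mu)
  (Hh0 : 0 < h0 < 1) (Hs : s > 2 * beta)
  (Hiv : cond_iv lam N b mu h0 s)
  (theta : R)
  (Htheta1 : INR d * (2 * alpha * beta - 1) - 2 * beta >= 0 ->
             theta > Rmin (INR d * (2 * alpha * beta - 1) - 2 * beta) (s - 2 * beta))
  (Htheta2 : INR d * (2 * alpha * beta - 1) - 2 * beta < 0 -> theta = 0) :
  exists C, 0 < C /\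
    exists h1, 0 < h1 /\
      forall h g, 0 < h < h0 -> h < h1 -> in_Hdot lam theta g ->
        normH (sq_sub (Lpow lam beta g) (Lhpow_Pi N b mu beta h g))
          <= C * Rpower h (Rmin (INR d * (2 * alpha * beta - 1)) s)
               * norm_dot lam theta g.
Proof.
  pose proof (lam_lb _ _ _ _ Heig) as Hlb.
  assert (Hc : 0 < c_lam) by (destruct Heig as (_ & H & _); exact H).
  assert (Hlpos : forall j, 0 < lam j) by (intros j; specialize (Hlb j); lra).
  set (D := INR d * (2 * alpha * beta - 1)).
  set (rho := Rmin D s).
  assert (HD0 : 0 <= D) by (unfold D; apply Rmult_le_pos; [apply pos_INR | lra]).
  assert (Hrho0 : 0 <= rho) by (unfold rho; apply Rmin_glb; lra).
  assert (Hrhos : rho <= s) by apply Rmin_r.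
  assert (Hth0 : 0 <= theta /\ theta > rho - 2 * beta).
  { destruct (Rlt_or_le (D - 2 * beta) 0) as [Hn|Hp].
    - rewrite (Htheta2 Hn). split. lra. unfold rho. pose proof (Rmin_l D s). lra.
    - specialize (Htheta1 (Rle_ge _ _ Hp)). fold D in Htheta1.
      assert (Rmin (D - 2 * beta) (s - 2 * beta) = rho - 2 * beta).
      { unfold rho, Rmin. destruct (Rle_dec (D - 2 * beta) (s - 2 * beta)); destruct (Rle_dec D s); lra. }
      rewrite H in Htheta1. split; [|lra].
      unfold rho in *. apply Rle_trans with (Rmin (D - 2 * beta) (s - 2 * beta)).
      apply Rmin_glb; lra. rewrite H. lra. }
  destruct Hth0 as [Hth0 Hthr].
  set (th1 := Rmin theta rho).
  assert (Hth1 : 0 <= th1 /\ th1 <= rho /\ th1 <= theta).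
  { unfold th1. split. apply Rmin_glb; lra. split. apply Rmin_r. apply Rmin_l. }
  destruct Hth1 as (Hth1a & Hth1b & Hth1c).
  destruct (Hiv th1 rho Hth1a Hth1b Hrhos) as (C1 & HC1 & Hb1).
  destruct (Hiv 0 s ltac:(lra) ltac:(lra) ltac:(lra)) as (C2 & HC2 & Hb2).
  set (k1 := beta + (th1 - rho) / 2).
  set (k2 := s / 2 - beta).
  assert (Hk1 : 0 < k1).
  { unfold k1, th1, Rmin. destruct (Rle_dec theta rho); lra. }
  assert (Hk2 : 0 < k2) by (unfold k2; lra).
  set (c1 := Rpower c_lam (th1 - theta)).
  set (c2 := Rpower c_lam (0 - theta)).
  set (K := K0 beta).
  assert (HK : 0 < K) by (apply K0_pos; auto).
  exists ((C1 * sqrt c1 / k1 + C2 * sqrt c2 / k2) / K + 1).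
  assert (HCc : 0 <= (C1 * sqrt c1 / k1 + C2 * sqrt c2 / k2) / K).
  { pose proof (sqrt_pos c1). pose proof (sqrt_pos c2).
    apply Rmult_le_pos; [|left; apply Rinv_0_lt_compat; auto].
    apply Rplus_le_le_0_compat; apply Rmult_le_pos; try (left; apply Rinv_0_lt_compat; auto); apply Rmult_le_pos; lra. }
  split. lra.
  exists 1. split. lra.
  intros h g Hh Hh1 Hg.
  assert (Hh' : 0 < h < 1) by lra.
  destruct (Hdot_mono lam c_lam th1 theta g Hc Hlb Hth1c Hg) as [Hg1 Hn1].
  destruct (Hdot_mono lam c_lam 0 theta g Hc Hlb Hth0 Hg) as [Hg0 Hn0].
  destruct (Hdot0_inH2 lam g Hlpos Hg0) as [HgH _].
  set (G := norm_dot lam theta g).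
  set (hr := Rpower h rho).
  assert (HG0 : 0 <= G) by apply sqrt_pos.
  assert (Hhr : 0 < hr) by apply exp_pos.
  assert (Hc1 : 0 < c1) by apply exp_pos.
  assert (Hc2 : 0 < c2) by apply exp_pos.
  assert (HSth : 0 <= Series (fun j => Rpower (lam j) theta * g j ^ 2)).
  { apply Series_nonneg. intros; apply Rmult_le_pos. left; apply exp_pos. apply pow2_ge_0. }
  assert (Hnd1 : norm_dot lam th1 g <= sqrt c1 * G).
  { unfold G, norm_dot. rewrite <- sqrt_mult by lra. apply sqrt_le_1_alt. exact Hn1. }
  assert (Hnd0 : norm_dot lam 0 g <= sqrt c2 * G).
  { unfold G, norm_dot. rewrite <- sqrt_mult by lra. apply sqrt_le_1_alt. exact Hn0. }
  assert (Hhs : Rpower h s <= hr) by (apply Rpower_h_le; auto).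
  set (A1 := C1 * hr * norm_dot lam th1 g).
  set (A2 := C2 * Rpower h s * norm_dot lam 0 g).
  assert (HA1 : 0 <= A1).
  { unfold A1. apply Rmult_le_pos. nra. apply sqrt_pos. }
  assert (HA2 : 0 <= A2).
  { unfold A2. apply Rmult_le_pos. pose proof (exp_pos (s * ln h)). unfold Rpower. nra. apply sqrt_pos. }
  apply stepA.
  { apply Rmult_le_pos; [|exact HG0]. apply Rmult_le_pos; lra. }
  intros J y Hy.
  set (Et := fun t => sq_sub (S_op lam t g) (Sh_Pi N b mu h t g)).
  set (x := sq_sub (Lpow lam beta g) (Lhpow_Pi N b mu beta h g)).
  assert (Hmu : forall i, (i < N h)%nat -> 0 < mu h i).
  { intros i Hi. eapply mu_pos; eauto. }
  assert (HEt : forall t, 0 < t -> inH2 (Et t)).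
  { intros t Ht.
    apply inH2_ext with (fun j => 1 * (exp (- t * lam j) * g j) + (-1) *
         fsum (N h) (fun i => (exp (- t * mu h i) * ipH g (b h i)) * b h i j)).
    { intros j. unfold Et, sq_sub, S_op, Sh_Pi. ring. }
    apply inH2_comb.
    - unfold inH2. apply ex_series_le_R with (fun j => g j ^ 2); [|exact HgH].
      intros n. rewrite Rabs_pos_eq by apply pow2_ge_0.
      assert (0 < exp (- t * lam n) <= 1).
      { split. apply exp_pos. rewrite <- exp_0. apply exp_le'. specialize (Hlpos n). nra. }
      assert (He : exp (- t * lam n) * exp (- t * lam n) <= 1) by nra.
      pose proof (Rmult_le_compat_r (g n * g n) _ _ (Rle_0_sqr (g n)) He).
      simpl. nra.
    - apply inH2_fsum. intros i Hi.
      destruct (HV h Hh') as (Hb1' & _).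
      destruct (Hdot_mono lam c_lam 0 1 (b h i) Hc Hlb ltac:(lra) (Hb1' i Hi)) as [Hbi _].
      apply (Hdot0_inH2 lam _ Hlpos Hbi). }
  assert (HGood : Good beta (fun t => fsum J (fun j => y j * Et t j)) (fsum J (fun j => y j * x j))).
  { apply Good_fsum. intros j _.
    apply Good_ext with (fun t => y j * Et t j + 0 * 0) (y j * x j + 0 * 0).
    intros; ring. ring.
    apply Good_comb; [|apply Good_zero].
    apply Good_ext with
      (fun t => g j * exp (- t * lam j) + (-1) * fsum (N h) (fun i => (ipH g (b h i) * b h i j) * exp (- t * mu h i)))
      (g j * Rpower (lam j) (- beta) + (-1) * fsum (N h) (fun i => (ipH g (b h i) * b h i j) * Rpower (mu h i) (- beta))).
    - intros t _. unfold Et, sq_sub, S_op, Sh_Pi.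
      assert (E : fsum (N h) (fun i => exp (- t * mu h i) * ipH g (b h i) * b h i j)
                = fsum (N h) (fun i => ipH g (b h i) * b h i j * exp (- t * mu h i)))
        by (apply fsum_ext; intros; ring).
      rewrite E. ring.
    - unfold x, sq_sub, Lpow, Lhpow_Pi.
      assert (E : fsum (N h) (fun i => Rpower (mu h i) (- beta) * ipH g (b h i) * b h i j)
                = fsum (N h) (fun i => ipH g (b h i) * b h i j * Rpower (mu h i) (- beta)))
        by (apply fsum_ext; intros; ring).
      rewrite E. ring.
    - apply Good_comb. apply Good_exp; auto.
      apply Good_fsum. intros i Hi.
      apply Good_ext with (fun t => (ipH g (b h i) * b h i j) * exp (- t * mu h i) + 0 * 0)
                          ((ipH g (b h i) * b h i j) * Rpower (mu h i) (- beta) + 0 * 0).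
      intros; ring. ring.
      apply Good_comb. apply Good_exp; auto. apply Good_zero. }
  assert (HCS : forall w, fsum J (fun j => y j * Et (exp w) j) <= normH (Et (exp w))).
  { intros w. apply CS_fsum; auto. apply HEt, exp_pos. }
  assert (Hk1b : forall w, Kern beta (fun t => fsum J (fun j => y j * Et t j)) w <= A1 * exp (k1 * w)).
  { intros w. unfold Kern.
    specialize (Hb1 (exp w) g h (exp_pos w) Hg1 Hh). fold (Et (exp w)) in Hb1.
    rewrite Rpower_exp in Hb1.
    apply Rle_trans with (exp (beta * w) * (C1 * Rpower h rho * exp ((th1 - rho) / 2 * w) * norm_dot lam th1 g)).
    apply Rmult_le_compat_l. left; apply exp_pos. eapply Rle_trans. apply HCS. exact Hb1.
    unfold A1, k1, hr. replace (exp ((beta + (th1 - rho) / 2) * w)) with (exp (beta * w) * exp ((th1 - rho) / 2 * w)).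
    right; ring. rewrite <- exp_plus. f_equal. ring. }
  assert (Hk2b : forall w, Kern beta (fun t => fsum J (fun j => y j * Et t j)) w <= A2 * exp (- k2 * w)).
  { intros w. unfold Kern.
    specialize (Hb2 (exp w) g h (exp_pos w) Hg0 Hh). fold (Et (exp w)) in Hb2.
    rewrite Rpower_exp in Hb2.
    apply Rle_trans with (exp (beta * w) * (C2 * Rpower h s * exp ((0 - s) / 2 * w) * norm_dot lam 0 g)).
    apply Rmult_le_compat_l. left; apply exp_pos. eapply Rle_trans. apply HCS. exact Hb2.
    unfold A2, k2. replace (exp (- (s / 2 - beta) * w)) with (exp (beta * w) * exp ((0 - s) / 2 * w)).
    right; ring. rewrite <- exp_plus. f_equal. unfold Rminus, Rdiv. rewrite Rplus_0_l. ring. }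
  pose proof (Kern_int_bound _ _ _ _ _ _ _ HGood HA1 Hk1 HA2 Hk2 Hk1b Hk2b) as HI.
  assert (HB0 : 0 <= A1 / k1 + A2 / k2).
  { apply Rplus_le_le_0_compat; apply Rmult_le_pos; auto; left; apply Rinv_0_lt_compat; auto. }
  pose proof (Good_conclude _ _ _ _ Hbeta HGood HB0 HI) as HXK. fold K in HXK.
  set (X := fsum J (fun j => y j * x j)) in *.
  set (P := C1 * sqrt c1 / k1 + C2 * sqrt c2 / k2).
  assert (HA1' : A1 / k1 <= hr * G * (C1 * sqrt c1 / k1)).
  { unfold Rdiv. replace (hr * G * (C1 * sqrt c1 * / k1)) with ((C1 * hr) * (sqrt c1 * G) * / k1) by ring.
    apply Rmult_le_compat_r. left; apply Rinv_0_lt_compat; auto.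
    unfold A1. apply Rmult_le_compat_l. nra. exact Hnd1. }
  assert (HA2' : A2 / k2 <= hr * G * (C2 * sqrt c2 / k2)).
  { unfold Rdiv. replace (hr * G * (C2 * sqrt c2 * / k2)) with ((C2 * hr) * (sqrt c2 * G) * / k2) by ring.
    apply Rmult_le_compat_r. left; apply Rinv_0_lt_compat; auto.
    unfold A2. apply Rmult_le_compat. 
    - apply Rmult_le_pos. lra. left; apply exp_pos.
    - apply sqrt_pos.
    - apply Rmult_le_compat_l; lra.
    - exact Hnd0. }
  assert (HXP : X * K <= hr * G * P) by (unfold P; lra).
  assert (HX : X <= hr * G * P / K).
  { apply (Rmult_le_reg_r K); auto. unfold Rdiv. rewrite Rmult_assoc, Rinv_l by lra. lra. }
  assert (HP : 0 <= P / K) by (unfold P; exact HCc).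
  apply Rle_trans with (hr * G * P / K). exact HX.
  assert (0 <= hr * G) by nra.
  unfold Rdiv. replace (hr * G * P * / K) with (P / K * (hr * G)) by (unfold Rdiv; ring).
  replace ((P / K + 1) * hr * G) with (P / K * (hr * G) + hr * G) by ring.
  fold P. lra.
Qed.
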